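(* Let $\mathbf{L}=\{\mathbf{b}_1,\dots,\mathbf{b}_r\}+\mathbb{N}(\mathbf{F})\subseteq\mathbb{N}^n$ with $\mathbf{F}$ finite, such that $(\mathbf{b}_i+\mathbb{N}(\mathbf{F}))\cap(\mathbf{b}_j+\mathbb{N}(\mathbf{F}))\neq\emptyset$ for all $i,j$ (so $\mathbf{L}$ is directed hybridlinear), and let $\mathbf{x}\in\mathbf{L}$. Then $\dim\big(\mathbf{L}\setminus(\mathbf{x}+\mathbb{N}(\mathbf{F}))\big)<\dim(\mathbf{L})$.
   Context: $\mathbb{N}(\mathbf{F})$: finite $\mathbb{N}$-linear combinations of $\mathbf{F}$. Dimension of $\mathbf{X}\subseteq\mathbb{Q}^n$: the least $k\in\mathbb{N}$ such that $\mathbf{X}\subseteq\bigcup_{i=1}^r(\mathbf{c}_i+\mathbf{V}_i)$ for finitely many $\mathbf{c}_i\in\mathbb{Q}^n$ and vector subspaces $\mathbf{V}_i$ of dimension $\le k$. *)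

(* Defs.v *)
From HB Require Import structures.
From mathcomp Require Import all_boot all_order all_algebra.
Set Implicit Arguments. Unset Strict Implicit. Unset Printing Implicit Defensive.
Import Order.TTheory GRing.Theory Num.Theory.
Local Open Scope ring_scope.

Definition toQ (n : nat) (v : 'rV[nat]_n) : 'rV[rat]_n := map_mx (fun k : nat => k%:R) v.

Definition Ncomb (n : nat) (F : seq 'rV[nat]_n) (v : 'rV[nat]_n) : Prop :=
  exists lam : 'I_(size F) -> nat, v = \sum_(i < size F) (F`_i *+ lam i).

Definition hlin (n : nat) (B F : seq 'rV[nat]_n) (v : 'rV[nat]_n) : Prop :=
  exists2 b, b \in B & exists2 u, Ncomb F u & v = b + u.

Definition directed (n : nat) (B F : seq 'rV[nat]_n) : Prop :=
  forall bi bj, bi \in B -> bj \in B ->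
    exists v, (exists2 u, Ncomb F u & v = bi + u) /\ (exists2 u, Ncomb F u & v = bj + u).

Definition coverable (n : nat) (X : 'rV[rat]_n -> Prop) (k : nat) : Prop :=
  exists s : seq ('rV[rat]_n * {vspace 'rV[rat]_n}),
    (forall p, p \in s -> (\dim p.2 <= k)%N) /\
    (forall x, X x -> exists2 p, p \in s & x - p.1 \in p.2).

Definition is_dim (n : nat) (X : 'rV[rat]_n -> Prop) (d : nat) : Prop :=
  coverable X d /\ forall k, coverable X k -> (d <= k)%N.

(* Main.v *)
Require Import Defs.
From HB Require Import structures.
From mathcomp Require Import all_boot all_order all_algebra.
From mathcomp Require Import ring.
From Stdlib Require Import Classical.
Import Order.TTheory GRing.Theory Num.Theory.
Set Implicit Arguments. Unset Strict Implicit.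
Local Open Scope ring_scope.

Section S.
Variable n : nat.
Implicit Types (F G : seq 'rV[nat]_n) (u v w : 'rV[nat]_n).

Inductive NC F : 'rV[nat]_n -> Prop :=
| NC0 : NC F 0
| NCS v f : NC F v -> f \in F -> NC F (v + f).

Lemma NC_add F u v : NC F u -> NC F v -> NC F (u + v).
Proof.
move=> hu; elim=> [|v' f _ IH hf]; first by rewrite addr0.
by rewrite addrA; apply: NCS.
Qed.

Lemma NC_mem F f : f \in F -> NC F f.
Proof. by move=> hf; rewrite -[f]add0r; apply: NCS => //; apply: NC0. Qed.

Lemma NC_mulrn F f k : f \in F -> NC F (f *+ k).
Proof.
move=> hf; elim: k => [|k IH]; first by rewrite mulr0n; apply: NC0.
by rewrite mulrS; apply: NC_add => //; apply: NC_mem.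
Qed.

Lemma NC_sub F G v : {subset F <= G} -> NC F v -> NC G v.
Proof. move=> sFG; elim=> [|v' f _ IH hf]; [apply: NC0|apply: NCS => //; exact: sFG]. Qed.

Lemma NC_muln F v k : NC F v -> NC F (v *+ k).
Proof.
move=> hv; elim: k => [|k IH]; first by rewrite mulr0n; apply: NC0.
by rewrite mulrS; apply: NC_add.
Qed.

Lemma NC_cons F g v : NC F v -> NC (g :: F) v.
Proof. by apply: NC_sub => z hz; rewrite inE hz orbT. Qed.

Lemma Ncomb_NC F v : Ncomb F v -> NC F v.
Proof.
case=> lam ->; apply: (big_ind (NC F)); [exact: NC0|exact: NC_add|].
move=> i _; apply: NC_mulrn; apply: mem_nth; exact: ltn_ord.
Qed.

Lemma Ncomb_add F u v : Ncomb F u -> Ncomb F v -> Ncomb F (u + v).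
Proof.
case=> l1 -> [l2 ->]; exists (fun i => (l1 i + l2 i)%N).
by rewrite -big_split /=; apply: eq_bigr => i _; rewrite mulrnDr.
Qed.

Lemma Ncomb_mem F f : f \in F -> Ncomb F f.
Proof.
move=> hf; have hi : (index f F < size F)%N by rewrite index_mem.
exists (fun i : 'I_(size F) => (i == Ordinal hi) : nat).
rewrite (bigD1 (Ordinal hi)) //= eqxx mulr1n nth_index // big1 ?addr0 //.
by move=> i /negbTE ->; rewrite mulr0n.
Qed.

Lemma NC_Ncomb F v : NC F v -> Ncomb F v.
Proof.
elim=> [|v' f _ IH hf].
  by exists (fun _ => 0%N); rewrite big1 // => i _; rewrite mulr0n.
by apply: Ncomb_add => //; apply: Ncomb_mem.
Qed.

Lemma toQD u v : toQ (u + v) = toQ u + toQ v.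
Proof. by apply/matrixP => i j; rewrite !mxE natrD. Qed.
Lemma toQ0 : toQ 0 = 0 :> 'rV[rat]_n.
Proof. by apply/matrixP => i j; rewrite !mxE. Qed.
Lemma toQMn u k : toQ (u *+ k) = k%:R *: toQ u.
Proof.
have h (a k0 : nat) : ((a *+ k0 : nat)%:R : rat) = a%:R *+ k0.
  by elim: k0 => [|k0 IH]; rewrite ?mulr0n // !mulrS natrD IH.
by apply/matrixP => i j; rewrite !mxE mulmxnE h mulr_natl.
Qed.
Lemma toQ_inj : injective (@toQ n).
Proof.
move=> u v /matrixP h; apply/matrixP => i j; move: (h i j); rewrite !mxE.
by move/eqP; rewrite eqr_nat => /eqP.
Qed.
Lemma toQ_sum I (r : seq I) (P : pred I) (E : I -> 'rV[nat]_n) :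
  toQ (\sum_(i <- r | P i) E i) = \sum_(i <- r | P i) toQ (E i).
Proof. exact: (big_morph _ toQD toQ0). Qed.

Definition mdim F : nat := \dim <<map (@toQ n) F>>%VS.

Lemma NC_span F v : NC F v -> toQ v \in <<map (@toQ n) F>>%VS.
Proof.
elim=> [|v' f _ IH hf]; first by rewrite toQ0 mem0v.
by rewrite toQD memvD // memv_span // map_f.
Qed.

End S.


Section S2.
Variable n : nat.
Implicit Types (F G : seq 'rV[nat]_n) (u v w : 'rV[nat]_n).

Lemma rat_nat_split (c : rat) : exists Dn : nat, (0 < Dn)%N /\
  ((exists P : nat, c = P%:R / Dn%:R) \/ (exists P : nat, c = - (P%:R / Dn%:R))).
Proof.
have hd := denq_gt0 c. have e := divq_num_den c.
move: hd e; case: (denq c) => [Dn|Dn] //= hD e.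
exists Dn; split; first by [].
move: e; case: (numq c) => [P|P] e.
  by left; exists P; rewrite -e.
right; exists P.+1; rewrite -e NegzE.
by rewrite rmorphN /= mulNr.
Qed.

Lemma int_rel G (y : 'rV[rat]_n) : y \in <<map (@toQ n) G>>%VS ->
  exists d : nat, (0 < d)%N /\ exists a b, NC G a /\ NC G b /\ y *+ d + toQ a = toQ b.
Proof.
elim: G y => [|g G IH] y.
  rewrite /= span_nil memv0 => /eqP ->.
  exists 1%N; split=> //; exists 0, 0; split; first exact: NC0.
  by split; [exact: NC0| rewrite mul0rn add0r].
rewrite /= span_cons => /memv_addP [y1 /vlineP [c ->] [y2 hy2 ->]].
have [d' [hd' [a' [b' [ha' [hb' e']]]]]] := IH _ hy2.
have [Dn [hDn [[P hP]|[P hP]]]] := rat_nat_split c.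
- exists (d' * Dn)%N; split; first by rewrite muln_gt0 hd'.
  exists (a' *+ Dn), (g *+ (P * d') + b' *+ Dn).
  split; first by apply: NC_muln; apply: NC_cons.
  split; first by apply: NC_add; [apply: NC_mulrn; rewrite inE eqxx|apply: NC_muln; apply: NC_cons].
  rewrite !toQD !toQMn -e' hP; apply/rowP => j; rewrite !mxE !mulmxnE !mxE.
  rewrite !natrM; field; by rewrite pnatr_eq0 -lt0n.
- exists (d' * Dn)%N; split; first by rewrite muln_gt0 hd'.
  exists (a' *+ Dn + g *+ (P * d')), (b' *+ Dn).
  split; first by apply: NC_add; [apply: NC_muln; apply: NC_cons|apply: NC_mulrn; rewrite inE eqxx].
  split; first by apply: NC_muln; apply: NC_cons.
  rewrite !toQD !toQMn -e' hP; apply/rowP => j; rewrite !mxE !mulmxnE !mxE.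
  rewrite !natrM; field; by rewrite pnatr_eq0 -lt0n.
Qed.
End S2.


Section S3.
Variable n : nat.
Implicit Types (F G : seq 'rV[nat]_n) (u v w : 'rV[nat]_n).

Definition CovLt (P : 'rV[nat]_n -> Prop) (k : nat) :=
  exists s : seq ('rV[rat]_n * {vspace 'rV[rat]_n}),
    (forall p, p \in s -> (\dim p.2 < k)%N) /\
    (forall w, P w -> exists2 p, p \in s & toQ w - p.1 \in p.2).

Lemma CovLt_sub (P Q : 'rV[nat]_n -> Prop) k :
  (forall w, P w -> Q w) -> CovLt Q k -> CovLt P k.
Proof. by move=> hPQ [s [h1 h2]]; exists s; split=> // w /hPQ /h2. Qed.

Lemma CovLt_U (P Q : 'rV[nat]_n -> Prop) k :
  CovLt P k -> CovLt Q k -> CovLt (fun w => P w \/ Q w) k.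
Proof.
move=> [s [h1 h2]] [t [h3 h4]]; exists (s ++ t); split.
  by move=> p; rewrite mem_cat => /orP [/h1|/h3].
move=> w [/h2 [p hp hw]|/h4 [p hp hw]]; exists p => //; by rewrite mem_cat hp ?orbT.
Qed.

Lemma CovLt_empty (P : 'rV[nat]_n -> Prop) k : (forall w, ~ P w) -> CovLt P k.
Proof. by move=> h; exists [::]; split=> // w /h. Qed.

Lemma CovLt_tr (P : 'rV[nat]_n -> Prop) k a :
  CovLt P k -> CovLt (fun w => exists2 w', P w' & w = a + w') k.
Proof.
move=> [s [h1 h2]]; exists [seq (toQ a + p.1, p.2) | p <- s]; split.
  by move=> p /mapP [q hq ->] /=; apply: h1.
move=> w [w' /h2 [p hp hw] ->]; exists (toQ a + p.1, p.2); first exact: map_f.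
by rewrite /= toQD opprD addrACA subrr add0r.
Qed.

Lemma CovLt_bigU (I : eqType) (r : seq I) (P : I -> 'rV[nat]_n -> Prop) k :
  (forall i, i \in r -> CovLt (P i) k) ->
  CovLt (fun w => exists2 i, i \in r & P i w) k.
Proof.
elim: r => [|i r IH] h; first by apply: CovLt_empty => w [i].
apply: (@CovLt_sub _ (fun w => P i w \/ exists2 j, j \in r & P j w)).
  move=> w [j]; rewrite inE => /orP [/eqP -> hw|hj hw]; first by left.
  by right; exists j.
apply: CovLt_U; first by apply: h; rewrite inE eqxx.
by apply: IH => j hj; apply: h; rewrite inE hj orbT.
Qed.

Definition E F e w := NC F w /\ ~ (exists t, NC F t /\ w = e + t).

Lemma NC_split F f w : NC F w ->
  (exists t, NC F t /\ w = f + t) \/ NC (filter (predC1 f) F) w.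
Proof.
elim=> [|v g hv [[t [ht ->]]|IH] hg].
- by right; apply: NC0.
- by left; exists (t + g); split; [apply: NCS|rewrite addrA].
- case: (eqVneq g f) => [->|ne].
    by left; exists v; split=> //; rewrite addrC.
  by right; apply: NCS => //; rewrite mem_filter /= ne.
Qed.

Lemma filter_sub F f : {subset filter (predC1 f) F <= F}.
Proof. by move=> z; rewrite mem_filter => /andP []. Qed.

Lemma size_filter_lt F f : f \in F -> (size (filter (predC1 f) F) < size F)%N.
Proof.
move=> hf; rewrite size_filter -[X in (_ < X)%N](count_predC (predC1 f)) -addn1 leq_add2l.
by rewrite -has_count; apply/hasP; exists f => //=; rewrite negbK.
Qed.

Lemma single F (IH : forall G, (size G < size F)%N -> forall e, NC G e -> CovLt (E G e) (mdim G))
  f : f \in F -> CovLt (E F f) (mdim F).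
Proof.
move=> hf; set G := filter (predC1 f) F.
have hG : forall w, E F f w -> NC G w.
  by move=> w [hw hn]; case: (NC_split f hw).
have sGF : (<<map (@toQ n) G>> <= <<map (@toQ n) F>>)%VS.
  by apply: sub_span => z /mapP [y hy ->]; apply: map_f; apply: filter_sub hy.
have szG : (size G < size F)%N by apply: size_filter_lt.


case: (boolP (toQ f \in <<map (@toQ n) G>>%VS)) => hfG.
- have [d [hd [a [b [ha [hb e]]]]]] := int_rel hfG.
  have eqd : mdim G = mdim F.
    rewrite /mdim; congr (\dim _); apply/eqP; rewrite eqEsubv sGF /=.
    apply/span_subvP => z /mapP [y hy ->].
    case: (eqVneq y f) => [->|ne] //.
    by apply: memv_span; apply: map_f; rewrite mem_filter /= ne.
  rewrite -eqd; apply: (CovLt_sub _ (IH G szG b hb)).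
  move=> w hw; split; first exact: hG.
  move=> [t [ht et]]; case: hw => hw; apply.
  exists (f *+ d.-1 + a + t); split.
    apply: NC_add; last exact: NC_sub (filter_sub (F:=F) (f:=f)) ht.
    apply: NC_add; [exact: NC_mulrn|exact: NC_sub (filter_sub (F:=F) (f:=f)) ha].
  have eb : b = f *+ d + a by apply: toQ_inj; rewrite toQD toQMn scaler_nat.
  by rewrite et eb; case: (d) hd => // d' _; rewrite mulrS /= !addrA.
- exists [:: (0, <<map (@toQ n) G>>%VS)]; split.
    move=> p; rewrite inE => /eqP -> /=.
    rewrite /mdim (ltn_leqif (dimv_leqif_eq sGF)).
    apply: contra hfG => /eqP ->; apply: memv_span; exact: map_f.
  move=> w /hG hw; exists (0, <<map (@toQ n) G>>%VS); first by rewrite inE.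
  by rewrite /= subr0; apply: NC_span.
Qed.

Lemma all_e F (IH : forall G, (size G < size F)%N -> forall e, NC G e -> CovLt (E G e) (mdim G))
  e : NC F e -> CovLt (E F e) (mdim F).
Proof.
elim=> [|v f hv IHv hf].
  apply: CovLt_empty => w [hw]; apply; by exists w; rewrite add0r.
apply: (@CovLt_sub _ (fun w => E F v w \/ exists2 w', E F f w' & w = v + w')).
  move=> w [hw hn]; case: (classic (exists t, NC F t /\ w = v + t)).
    move=> [t [ht et]]; right; exists t => //; split=> // [[t' [ht' et']]].
    by apply: hn; exists t'; split=> //; rewrite et et' addrA.
  by move=> h; left.
by apply: CovLt_U => //; apply: CovLt_tr; apply: single.
Qed.

Lemma cov_main N F : (size F < N)%N -> forall e, NC F e -> CovLt (E F e) (mdim F).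
Proof.
elim: N F => [|N IHN] F //= hs; apply: all_e => G hG; apply: IHN.
exact: leq_trans hG hs.
Qed.

End S3.


Section S4.
Variable n : nat.
Implicit Types (F G : seq 'rV[nat]_n) (u v w : 'rV[nat]_n).

Definition U F (t : nat) : 'rV[nat]_n := \sum_(i < size F) F`_i *+ (t ^ i.+1).

Lemma toQU b0 F t : toQ (b0 + U F t) =
  toQ b0 + \sum_(i < size F) (t%:R ^+ i.+1) *: toQ F`_i.
Proof.
rewrite toQD /U toQ_sum; congr (_ + _); apply: eq_bigr => i _.
by rewrite toQMn natrX.
Qed.

Lemma gsplit (V : {vspace 'rV[rat]_n}) (y : 'rV[rat]_n) F (t : nat) :
  let z := y + \sum_(i < size F) (t%:R ^+ i.+1) *: toQ F`_i in
  z - projv V z = (y - projv V y) +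
    \sum_(i < size F) (t%:R ^+ i.+1) *: (toQ F`_i - projv V (toQ F`_i)).
Proof.
rewrite /= linearD linear_sum /= opprD addrACA -sumrB; congr (_ + _).
by apply: eq_bigr => i _; rewrite linearZ /= scalerBr.
Qed.

Lemma one_poly b0 F (c : 'rV[rat]_n) (V : {vspace 'rV[rat]_n}) (i : 'I_(size F)) :
  toQ F`_i \notin V -> exists P : {poly rat}, P != 0 /\
   forall t : nat, ~~ root P t%:R -> toQ (b0 + U F t) - c \notin V.
Proof.
move=> hi.
set a := fun k : nat => toQ F`_k - projv V (toQ F`_k).
set w := (toQ b0 - c) - projv V (toQ b0 - c).
have [l hl] : exists l, a i 0 l != 0.
  apply/existsP; apply: contraR hi => /existsPn h.
  have e : a i = 0 by apply/rowP => l; rewrite [RHS]mxE; apply/eqP; move: (h l); rewrite negbK.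
  by move/eqP: e; rewrite subr_eq0 => /eqP ->; apply: memv_proj.
exists (\poly_(k < (size F).+1) (if k is k'.+1 then a k' 0 l else w 0 l)); split.
  apply/eqP => h; have := congr1 (fun p : {poly rat} => p`_i.+1) h.
  by rewrite coef_poly coef0 ltnS ltn_ord /=; apply/eqP.
move=> t; apply: contra => hin.
set z := toQ (b0 + U F t) - c.
have z0 : z - projv V z = 0 by rewrite projv_id ?subrr.
have : z = (toQ b0 - c) + \sum_(i < size F) (t%:R ^+ i.+1) *: toQ F`_i.
  by rewrite /z toQU addrAC.
move=> ez; move: z0; rewrite ez gsplit => /rowP /(_ l); rewrite !mxE summxE.
rewrite /root horner_poly big_ord_recl /= expr0 mulr1 => e; apply/eqP; rewrite -[RHS]e.
rewrite /w; congr (_ + _); apply: eq_bigr => k _; rewrite !mxE /a mulrC.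
by [].
Qed.

Lemma poly_all b0 F (s : seq ('rV[rat]_n * {vspace 'rV[rat]_n})) :
  (forall p, p \in s -> exists i : 'I_(size F), toQ F`_i \notin p.2) ->
  exists P : {poly rat}, P != 0 /\ forall t : nat, ~~ root P t%:R ->
    forall p, p \in s -> toQ (b0 + U F t) - p.1 \notin p.2.
Proof.
elim: s => [|p s IH] h.
  by exists 1; split; [exact: oner_neq0|].
have [P [hP1 hP2]] : exists P : {poly rat}, P != 0 /\ forall t : nat, ~~ root P t%:R -> forall p, p \in s -> toQ (b0 + U F t) - p.1 \notin p.2.
  by apply: IH => q hq; apply: h; rewrite inE hq orbT.
have [i hi] := h p (mem_head _ _).
have [Q [hQ1 hQ2]] := one_poly b0 p.1 hi.
exists (Q * P); split; first exact: mulf_neq0.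
move=> t; rewrite rootM negb_or => /andP [r1 r2] q; rewrite inE => /orP [/eqP ->|hq].
  exact: hQ2.
exact: hP2.
Qed.

Lemma exists_nonroot (P : {poly rat}) : P != 0 -> exists t : nat, ~~ root P t%:R.
Proof.
move=> hP; apply: NNPP => h.
have hall : all (root P) [seq t%:R | t <- iota 0 (size P)].
  apply/allP => y /mapP [t _ ->]; apply/negPn/negP => hr; apply: h; by exists t.
have hu : uniq [seq (t%:R : rat) | t <- iota 0 (size P)].
  by rewrite map_inj_uniq ?iota_uniq // => x y /eqP; rewrite eqr_nat => /eqP.
have := max_poly_roots hP hall hu.
by rewrite size_map size_iota ltnn.
Qed.

Lemma lower b0 F (s : seq ('rV[rat]_n * {vspace 'rV[rat]_n})) :
  (forall u, Ncomb F u -> exists2 p, p \in s & toQ (b0 + u) - p.1 \in p.2) ->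
  exists2 p, p \in s & (mdim F <= \dim p.2)%N.
Proof.
move=> hcov; apply: NNPP => hn.
have h : forall p, p \in s -> exists i : 'I_(size F), toQ F`_i \notin p.2.
  move=> p hp; apply: NNPP => hi; apply: hn; exists p => //.
  rewrite /mdim; apply: dimvS; apply/span_subvP => z /mapP [y hy ->].
  have hidx : (index y F < size F)%N by rewrite index_mem.
  apply/negPn/negP => hz; apply: hi; exists (Ordinal hidx); by rewrite /= nth_index.
have [P [hP1 hP2]] := poly_all b0 h.
have [t ht] := exists_nonroot hP1.
have [p hp hin] : exists2 p, p \in s & toQ (b0 + U F t) - p.1 \in p.2.
  by apply: hcov; exists (fun i : 'I_(size F) => (t ^ i.+1)%N).
by move: (hP2 t ht p hp); rewrite hin.
Qed.

End S4.

Unset Implicit Arguments.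


Lemma min_ex (P : nat -> Prop) k : P k -> exists d, P d /\ forall j, P j -> (d <= j)%N.
Proof.
elim: k {-2}k (leqnn k) => [|N IH] k hk hP.
  by exists k; split=> // j _; move: hk; rewrite leqn0 => /eqP ->.
case: (classic (exists j, (j < k)%N /\ P j)) => [[j [hj Pj]]|hn].
  by apply: (IH j) => //; rewrite -ltnS; apply: leq_trans hj hk.
exists k; split=> // j Pj; rewrite leqNgt; apply/negP => hj; apply: hn; by exists j.
Qed.

Theorem mainTheorem17 (n : nat) (B F : seq 'rV[nat]_n) (x : 'rV[nat]_n) :
  directed B F -> hlin B F x ->
  let L := fun q : 'rV[rat]_n => exists2 v, hlin B F v & q = toQ v in
  let D := fun q : 'rV[rat]_n =>
    exists2 v, (hlin B F v /\ ~ (exists2 u, Ncomb F u & v = x + u)) & q = toQ v in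
  (forall q, ~ D q) \/
  (exists d dL : nat, is_dim D d /\ is_dim L dL /\ (d < dL)%N).
Proof.
move=> dir hx L D.
have [b0 hb0 [u0 hu0 ex]] := hx.
set m := mdim F.
pose PD v := hlin B F v /\ ~ (exists2 u, Ncomb F u & v = x + u).
pose Pb b v := exists2 u, NC F u & (v = b + u /\ ~ (exists t, NC F t /\ v = x + t)).
have Dcov : CovLt PD m.
  apply: (@CovLt_sub _ _ (fun v => exists2 b, b \in B & Pb b v)).
    move=> v [[b hb [u hu ev]] hn]; exists b => //; exists u; first exact: Ncomb_NC.
    split=> // [[t [ht et]]]; apply: hn; exists t => //; exact: NC_Ncomb.
  apply: CovLt_bigU => b hb.
  have [vv [[u1 hu1 e1] [u2 hu2 e2]]] := dir b b0 hb hb0.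
  apply: (@CovLt_sub _ _ (fun v => exists2 w', E F (u1 + u0) w' & v = b + w')).
    move=> v [u hu [ev hn]]; exists u => //; split=> // [[t [ht et]]].
    apply: hn; exists (u2 + t); split.
      by apply: NC_add => //; apply: Ncomb_NC.
    rewrite ev et ex addrA addrA e1 in e2 *.
    by rewrite e2; rewrite -!addrA; congr (_ + _); rewrite addrCA.
  apply: CovLt_tr; apply: (@cov_main _ (size F).+1) => //.
  by apply: NC_add; apply: Ncomb_NC.
have Lcov : coverable L m.
  exists [seq (toQ b, <<map (@toQ n) F>>%VS) | b <- B]; split.
    by move=> p /mapP [b _ ->].
  move=> q [v [b hb [u hu ev]] ->]; exists (toQ b, <<map (@toQ n) F>>%VS).
    exact: map_f.
  by rewrite /= ev toQD addrC addKr; apply: NC_span; apply: Ncomb_NC.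
have Llow : forall k, coverable L k -> (m <= k)%N.
  move=> k [s [h1 h2]].
  have [p hp hm] : exists2 p, p \in s & (m <= \dim p.2)%N.
    apply: lower => u hu; apply: h2; exists (b0 + u) => //; exists b0 => //; by exists u.
  exact: leq_trans hm (h1 p hp).
case: (classic (exists q, D q)) => [[q0 hq0]|hn]; last first.
  by left => q hq; apply: hn; exists q.
right.
have [s [h1 h2]] := Dcov.
have [v0 hv0 _] := hq0.
have [p0 hp0 _] := h2 v0 hv0.
have m0 : (0 < m)%N by apply: leq_ltn_trans (h1 p0 hp0).
have Dc : coverable D m.-1.
  exists s; split.
    by move=> p hp; rewrite -ltnS prednK //; apply: h1.
  by move=> q [v hv ->]; apply: h2.
have [d [hd1 hd2]] := @min_ex (coverable D) _ Dc.
have [dL [hL1 hL2]] := @min_ex (coverable L) _ Lcov.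
exists d, dL; split; first by split.
split; first by split.
have := hd2 _ Dc; have := Llow _ hL1.
by case: (m) m0 => // m' _ h1' h2'; apply: leq_ltn_trans h2' h1'.
Qed.
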